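(* Let $n\ge3$, let $e_1,\dots,e_n\ge1$ be integers, let $p$ be a prime with $p>\max\{e_1,\dots,e_n\}$, and let $R$ be a nonzero $\mathbf F_p$-algebra (commutative, unital). If $\max\{e_1,\dots,e_n\}>1$, then $G_{R,n;e_1,\dots,e_n}$ contains an elementary abelian $p$-group of infinite rank; in particular it is infinite.
   Context: For distinct $i,j$, $e\ge0$, $r\in R$: $\alpha_{i;j}^{(e)}(r)\in\mathrm{Aut}(R[x_1,\dots,x_n])$ maps $x_i\mapsto x_i+rx_j^e$ and fixes $x_\ell$ for $\ell\ne i$. $G_{R,n;e_1,\dots,e_n}$ is the subgroup generated by $\{\alpha_{i;i+1}^{(e_i)}(r): 1\le i\le n, r\in R\}$, indices modulo $n$. *)

(* Defs.v *)
From HB Require Import structures.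
From mathcomp Require Import all_boot all_order all_algebra.
From mathcomp Require Import mpoly.
Set Implicit Arguments. Unset Strict Implicit. Unset Printing Implicit Defensive.
Import GRing.Theory.
Local Open Scope ring_scope.

(* An R-algebra endomorphism of R[x_1..x_n] is represented by the n-tuple of
   images of the variables x_0, ..., x_(n-1) (0-based indices). *)
Definition endo (R : comNzRingType) (n : nat) := n.-tuple {mpoly R[n]}.

Definition endo_id (R : comNzRingType) (n : nat) : endo R n :=
  [tuple 'X_j | j < n].

(* composition: (endo_comp s t) = s o t, i.e. x_j |-> s(t(x_j)) = t_j(s_1,...,s_n) *)
Definition endo_comp (R : comNzRingType) (n : nat) (s t : endo R n) : endo R n :=
  [tuple comp_mpoly s (tnth t j) | j < n].

Fixpoint endo_pow (R : comNzRingType) (n : nat) (s : endo R n) (k : nat) : endo R n :=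
  match k with
  | 0%N => endo_id R n
  | k'.+1 => endo_comp s (endo_pow s k')
  end.

Definition alpha (R : comNzRingType) (n : nat) (i j : 'I_n) (e : nat) (r : R) : endo R n :=
  [tuple (if k == i then 'X_i + r *: 'X_j ^+ e else 'X_k) | k < n].

(* membership in G_{R,n;e_1..e_n}: the subgroup generated by the
   alpha_{i;i+1}^{(e_i)}(r) (indices cyclic via ordS).  Since
   alpha_{i;j}^{(e)}(r) has inverse alpha_{i;j}^{(e)}(-r), the generated
   subgroup consists of the finite compositions of generators. *)
Inductive inG (R : comNzRingType) (n : nat) (e : 'I_n -> nat) : endo R n -> Prop :=
  | inG_id : inG e (endo_id R n)
  | inG_gen (i : 'I_n) (r : R) (g : endo R n) :
      inG e g -> inG e (endo_comp (alpha i (ordS i) (e i) r) g).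

(* H is a subgroup of the group of automorphisms which is an elementary abelian
   p-group: contains id, closed under composition, commutative, exponent p
   (inverses are then given by h^(p-1)). *)
Definition elem_abelian_p_subgroup (R : comNzRingType) (n p : nat)
    (H : endo R n -> Prop) : Prop :=
  [/\ H (endo_id R n),
      (forall g h, H g -> H h -> H (endo_comp g h)),
      (forall g h, H g -> H h -> endo_comp g h = endo_comp h g)
    & (forall h, H h -> endo_pow h p = endo_id R n)].

Definition infinite_set (T : eqType) (H : T -> Prop) : Prop :=
  forall s : seq T, exists x, H x /\ x \notin s.

(* Main.v *)
Require Import Defs.
From HB Require Import structures.
From mathcomp Require Import all_boot all_order all_algebra.
From mathcomp Require Import mpoly.
From mathcomp Require Import ring zify.
Set Implicit Arguments. Unset Strict Implicit. Unset Printing Implicit Defensive.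
Import GRing.Theory.
Local Open Scope ring_scope.

Section Ident.
Variable S : comNzRingType.

Lemma Sid d i : (i <= d)%N ->
  \sum_(l < d.+1) ((-1)^+(d-l) * ('C(d,l))%:R) * ((l%:R : S)^+i)
  = if i == d then (d`!)%:R else 0.
Proof.
elim: d i => [|d IH] i.
  rewrite leqn0 => /eqP ->; rewrite big_ord1 /= expr0 !mulr1.
  by [].
case: i => [_|j Hj].
  have := exprDn (-1 : S) 1 d.+1.
  rewrite addNr expr0n /= => E.
  rewrite [RHS]E; apply: eq_bigr => l _.
  by rewrite expr1n !mulr1 mulr_natr.
rewrite big_ord_recl /= expr0n /= mulr0 add0r.
have Hj' : (j <= d)%N by [].
transitivity (\sum_(l < d.+1) ((d.+1)%:R * ((-1)^+(d - l) * ('C(d, l))%:R)) *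
               ((l.+1)%:R : S) ^+ j).
  apply: eq_bigr => l _; rewrite /bump /= add1n subSS.
  have K : ('C(d.+1,l.+1))%:R * (l.+1)%:R = (d.+1)%:R * ('C(d,l))%:R :> S.
    by rewrite -!natrM mulnC -mul_bin_diag.
  rewrite exprS.
  transitivity ((-1) ^+ (d - l) * (('C(d.+1,l.+1))%:R * (l.+1)%:R) * ((l.+1)%:R : S) ^+ j).
    by ring.
  by rewrite K; ring.
transitivity (\sum_(l < d.+1) ((d.+1)%:R * ((-1)^+(d - l) * ('C(d, l))%:R)) *
               \sum_(s < j.+1) (((l%:R : S)^+(j - s)) *+ 'C(j, s))).
  apply: eq_bigr => l _; congr (_ * _).
  rewrite -addn1 natrD exprDn; apply: eq_bigr => s _; by rewrite expr1n mulr1.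
under eq_bigr do rewrite mulr_sumr.
rewrite exchange_big /=.
transitivity (\sum_(s < j.+1) ((d.+1)%:R * ('C(j,s))%:R) *
  \sum_(l < d.+1) ((-1)^+(d - l) * ('C(d, l))%:R) * ((l%:R : S)^+(j - s))).
  apply: eq_bigr => s _; rewrite mulr_sumr; apply: eq_bigr => l _.
  by rewrite -mulr_natr; ring.
under eq_bigr => s _ do rewrite IH ?leq_subLR ?(leq_trans Hj') ?leq_addl //.
rewrite big_ord_recl /= subn0 big1 ?addr0; last first.
  move=> s _; case: eqP => [E|]; last by rewrite mulr0.
  exfalso; move: E; rewrite /bump /= add1n => E.
  have : (j - s.+1 < j)%N by rewrite ltn_subrL /= (leq_ltn_trans _ (ltn_ord s)).
  by rewrite E ltnNge Hj'.
rewrite bin0 mulr1 eqSS; case: eqP => [_|]; last by rewrite mulr0.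
by rewrite factS natrM.
Qed.

Lemma extract d (x y : S) :
  \sum_(l < d.+1) ((-1)^+(d-l) * ('C(d,l))%:R) * (x + l%:R * y) ^+ d
  = (d`!)%:R * y ^+ d.
Proof.
transitivity (\sum_(l < d.+1) ((-1)^+(d-l) * ('C(d,l))%:R) *
   \sum_(i < d.+1) (x ^+ (d - i) * (y ^+ i * (l%:R : S) ^+ i)) *+ 'C(d, i)).
  apply: eq_bigr => l _; rewrite exprDn; congr (_ * _); apply: eq_bigr => i _.
  by rewrite exprMn [_ ^+ i * _]mulrC.
under eq_bigr do rewrite mulr_sumr.
rewrite exchange_big /=.
transitivity (\sum_(i < d.+1) (x ^+ (d - i) * y ^+ i *+ 'C(d, i)) *
  \sum_(l < d.+1) ((-1)^+(d-l) * ('C(d,l))%:R) * ((l%:R : S)^+i)).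
  apply: eq_bigr => i _; rewrite mulr_sumr; apply: eq_bigr => l _.
  by ring.
under eq_bigr => i _ do rewrite (Sid (ltnSE (ltn_ord i))).
rewrite big_ord_recr /= big1 ?add0r; last first.
  by move=> i _; rewrite ltn_eqF ?mulr0.
by rewrite eqxx subnn expr0 mul1r binn mulr1n mulrC.
Qed.
End Ident.


Section Gen.
Variable R : comNzRingType.
Variable n : nat.
Implicit Types (s t u : endo R n) (f g : {mpoly R[n]}).

Lemma comp_mpolyA s t f :
  comp_mpoly s (comp_mpoly t f) = comp_mpoly (endo_comp s t) f.
Proof.
rewrite (comp_mpolyEX f t) (comp_mpolyEX f (endo_comp s t)) raddf_sum /=.
apply/eq_bigr => m _; rewrite comp_mpolyZ; congr (_ *: _).
rewrite !comp_mpolyX rmorph_prod /=; apply/eq_bigr => i _.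
by rewrite rmorphXn /= tnth_mktuple.
Qed.

Lemma endo_compA s t u : endo_comp (endo_comp s t) u = endo_comp s (endo_comp t u).
Proof.
apply: eq_from_tnth => j; rewrite !tnth_mktuple.
by rewrite comp_mpolyA.
Qed.

Lemma endo_comp1t t : endo_comp (endo_id R n) t = t.
Proof.
apply: eq_from_tnth => j; rewrite tnth_mktuple.
exact: comp_mpoly_id.
Qed.

Lemma endo_compt1 t : endo_comp t (endo_id R n) = t.
Proof.
apply: eq_from_tnth => j; rewrite !tnth_mktuple comp_mpolyXU -tnth_nth //.
Qed.

Definition kill (i : 'I_n) : endo R n := [tuple (if k == i then 0 else 'X_k) | k < n].
Definition freev (i : 'I_n) f := comp_mpoly (kill i) f = f.
Definition trans (i : 'I_n) f : endo R n :=
  [tuple (if k == i then 'X_i + f else 'X_k) | k < n].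

Lemma free_eq i f s t : freev i f -> (forall j, j != i -> tnth s j = tnth t j) ->
  comp_mpoly s f = comp_mpoly t f.
Proof.
move=> Hf Hst; rewrite -Hf !comp_mpolyA; congr comp_mpoly.
apply: eq_from_tnth => j; rewrite !tnth_mktuple.
case: (eqVneq j i) => [_|Hj]; first by rewrite !comp_mpoly0.
by rewrite !comp_mpolyXU -!tnth_nth Hst.
Qed.

Lemma freeD i f g : freev i f -> freev i g -> freev i (f + g).
Proof. by rewrite /freev comp_mpolyD => -> ->. Qed.
Lemma freeN i f : freev i f -> freev i (- f).
Proof. by rewrite /freev comp_mpolyN => ->. Qed.
Lemma freeM i f g : freev i f -> freev i g -> freev i (f * g).
Proof. by rewrite /freev rmorphM /= => -> ->. Qed.
Lemma freeX i f k : freev i f -> freev i (f ^+ k).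
Proof. by rewrite /freev rmorphXn /= => ->. Qed.
Lemma freeZ i f c : freev i f -> freev i (c *: f).
Proof. by rewrite /freev comp_mpolyZ => ->. Qed.
Lemma free0 i : freev i 0.
Proof. by rewrite /freev comp_mpoly0. Qed.
Lemma freeXU i j : j != i -> freev i 'X_j.
Proof. by move=> Hj; rewrite /freev comp_mpolyXU -tnth_nth tnth_mktuple (negbTE Hj). Qed.
Lemma free_sum i (I : Type) (r : seq I) (F : I -> {mpoly R[n]}) :
  (forall x, freev i (F x)) -> freev i (\sum_(x <- r) F x).
Proof.
move=> H; elim: r => [|x r IH]; first by rewrite big_nil; apply: free0.
by rewrite big_cons; apply: freeD.
Qed.

Definition Nk (i : 'I_n) (T : endo R n) :=
  tnth T i = 'X_i /\ forall j, j != i -> freev i (tnth T j).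

Lemma free_comp i f T : freev i f -> (forall j, j != i -> freev i (tnth T j)) ->
  freev i (comp_mpoly T f).
Proof.
move=> Hf HT; rewrite /freev comp_mpolyA; apply: (free_eq Hf) => j Hj.
by rewrite tnth_mktuple; apply: HT.
Qed.

Lemma tnth_trans i f j : tnth (trans i f) j = if j == i then 'X_i + f else 'X_j.
Proof. by rewrite tnth_mktuple. Qed.

Lemma comp_trans_free i f g : freev i g -> comp_mpoly (trans i f) g = g.
Proof.
move=> Hg; rewrite (@free_eq i g _ (endo_id R n)) ?comp_mpoly_id //.
by move=> j Hj; rewrite tnth_trans tnth_mktuple (negbTE Hj).
Qed.

Lemma trans_comp i f g : freev i f -> freev i g ->
  endo_comp (trans i f) (trans i g) = trans i (f + g).
Proof.
move=> Hf Hg; apply: eq_from_tnth => j; rewrite tnth_mktuple !tnth_trans.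
case: (eqVneq j i) => [_|Hj].
  by rewrite comp_mpolyD comp_mpolyXU -tnth_nth tnth_trans eqxx comp_trans_free // addrA.
by rewrite comp_mpolyXU -tnth_nth tnth_trans (negbTE Hj).
Qed.

Lemma trans0 i : trans i 0 = endo_id R n.
Proof.
apply: eq_from_tnth => j; rewrite tnth_trans tnth_mktuple addr0.
by case: eqP => // ->.
Qed.

Lemma conj_trans i f T : Nk i T -> freev i f ->
  endo_comp T (trans i f) = endo_comp (trans i (comp_mpoly T f)) T.
Proof.
move=> [HTi HT] Hf; apply: eq_from_tnth => j; rewrite !tnth_mktuple.
case: (eqVneq j i) => [Hji|Hj].
  by subst j; rewrite comp_mpolyD comp_mpolyXU -tnth_nth HTi comp_mpolyXU -tnth_nth tnth_trans eqxx.
rewrite comp_mpolyXU -tnth_nth comp_trans_free //; exact: HT.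
Qed.

Lemma Nk_trans i j f : j != i -> freev i f -> Nk i (trans j f).
Proof.
move=> Hji Hf; split; first by rewrite tnth_trans eq_sym (negbTE Hji).
move=> k Hk; rewrite tnth_trans; case: (eqVneq k j) => [_|_]; last exact: freeXU.
by apply: freeD => //; apply: freeXU.
Qed.

Lemma Nk_comp i s t : Nk i s -> Nk i t -> Nk i (endo_comp s t).
Proof.
move=> [Hsi Hs] [Hti Ht]; split.
  by rewrite tnth_mktuple Hti comp_mpolyXU -tnth_nth.
by move=> j Hj; rewrite tnth_mktuple; apply: free_comp => //; apply: Ht.
Qed.

Lemma pow_trans i f k : freev i f -> endo_pow (trans i f) k = trans i (f *+ k).
Proof.
move=> Hf; elim: k => [|k IH] /=; first by rewrite mulr0n trans0.
by rewrite IH (trans_comp Hf) ?mulrS // /freev raddfMn /= Hf.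
Qed.
End Gen.


Lemma not_dvd_fact p d : prime p -> (d < p)%N -> ~~ (p %| d`!)%N.
Proof.
move=> pr; elim: d => [|d IH] Hd.
  by rewrite fact0 dvdn1 neq_ltn prime_gt1 ?orbT.
rewrite factS Euclid_dvdM // negb_or IH ?(ltnW Hd) // andbT.
by rewrite gtnNdvd.
Qed.

Lemma fact_unit (R : comNzRingType) p d : p \in [pchar R] -> (d < p)%N ->
  exists u : R, u * (d`!)%:R = 1.
Proof.
move=> Hp Hd; have pr := pcharf_prime Hp.
have cop : coprime (d`!) p by rewrite coprime_sym prime_coprime // not_dvd_fact.
case: (egcdnP p (fact_gt0 d)) => km kn E _.
exists km%:R; rewrite -natrM E natrD natrM (pcharf0 Hp) mulr0 add0r.
by move/eqP: cop => ->.
Qed.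

Section G.
Variables (R : comNzRingType) (n : nat) (e : 'I_n -> nat).

Lemma inG_comp (g h : endo R n) : inG e g -> inG e h -> inG e (endo_comp g h).
Proof.
elim=> [|i r g0 Hg IH] Hh; first by rewrite endo_comp1t.
rewrite endo_compA; constructor; exact: IH.
Qed.

Lemma inG_alpha i (r : R) : inG e (trans i (r *: 'X_(ordS i) ^+ e i)).
Proof.
have := inG_gen i r (@inG_id R n e); rewrite endo_compt1; exact.
Qed.

Lemma inG_sum i (I : Type) (s : seq I) (F : I -> {mpoly R[n]}) :
  (forall x, inG e (trans i (F x)) /\ freev i (F x)) ->
  inG e (trans i (\sum_(x <- s) F x)).
Proof.
move=> H; elim: s => [|x s IH]; first by rewrite big_nil trans0; constructor.
have [H1 H2] := H x.
rewrite big_cons -trans_comp //; first exact: inG_comp.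
by apply: free_sum => y; case: (H y).
Qed.

Lemma shortcut i l D (u : R) : ordS i != i -> l != i -> l != ordS i ->
  u * ((e i)`!)%:R = 1 ->
  (forall r : R, inG e (trans (ordS i) (r *: 'X_l ^+ D))) ->
  forall r : R, inG e (trans i (r *: 'X_l ^+ (e i * D))).
Proof.
move=> Hji Hli Hlj Hu HM r.
set j := ordS i in Hji Hlj HM *; set d := e i in Hu *; set Y : {mpoly R[n]} := 'X_l ^+ D.
have fYi : freev i Y by apply: freeX; apply: freeXU.
have fYj : freev j Y by apply: freeX; apply: freeXU.
have HA : forall c (lam : R), inG e (trans i (c *: ('X_j + lam *: Y) ^+ d)).
  move=> c lam.
  have HB := HM lam; have HBi := HM (- lam).
  have NkB : Nk i (trans j (lam *: Y)) by apply: Nk_trans => //; apply: freeZ.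
  have Hf : freev i (c *: 'X_j ^+ d) by apply: freeZ; apply: freeX; apply: freeXU.
  have E := conj_trans NkB Hf.
  have BB : endo_comp (trans j (lam *: Y)) (trans j (- lam *: Y)) = endo_id R n.
    by rewrite trans_comp ?scaleNr ?addrN ?trans0 //; [apply: freeZ | apply: freeN; apply: freeZ].
  have -> : c *: ('X_j + lam *: Y) ^+ d = comp_mpoly (trans j (lam *: Y)) (c *: 'X_j ^+ d).
    by rewrite comp_mpolyZ rmorphXn /= comp_mpolyXU -tnth_nth tnth_trans eqxx.
  have -> : trans i (comp_mpoly (trans j (lam *: Y)) (c *: 'X_j ^+ d)) =
     endo_comp (endo_comp (trans j (lam *: Y)) (trans i (c *: 'X_j ^+ d))) (trans j (- lam *: Y)).
    by rewrite E endo_compA BB endo_compt1.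
  apply: inG_comp => //; apply: inG_comp => //; exact: inG_alpha.
pose a (k : 'I_d.+1) : R := (-1)^+(d-k) * ('C(d,k))%:R.
have -> : r *: 'X_l ^+ (d * D) = \sum_(k < d.+1) ((r * u) * a k) *: ('X_j + (k%:R : R) *: Y) ^+ d.
  under eq_bigr do rewrite -scalerA.
  rewrite -scaler_sumr.
  transitivity ((r * u) *: \sum_(k < d.+1) ((-1)^+(d-k) * ('C(d,k))%:R) * ('X_j + k%:R * Y) ^+ d).
    rewrite extract mulr_natl -scaler_nat scalerA -mulrA Hu mulr1.
    by rewrite mulnC exprM.
  congr (_ *: _); apply: eq_bigr => k _.
  by rewrite /a -mul_mpolyC rmorphM rmorphXn rmorphN1 rmorph_nat scaler_nat mulr_natl.
apply: inG_sum => k; split; first exact: HA.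
apply: freeZ; apply: freeX; apply: freeD; first exact: freeXU.
exact: freeZ.
Qed.
End G.


Section Deg.
Variable R : comNzRingType.
Implicit Types (q : {poly R}).

Lemma size_monicX q c : q \is monic -> size (q ^+ c) = ((size q).-1 * c).+1.
Proof.
move=> Hq; have sq : (0 < size q)%N by rewrite size_poly_gt0 monic_neq0.
elim: c => [|c IH]; first by rewrite expr0 size_poly1 muln0.
rewrite exprS size_monicM ?monic_neq0 ?monic_exp // IH; lia.
Qed.

Lemma monic_addl (p q : {poly R}) : (size p < size q)%N -> q \is monic ->
  (p + q \is monic) /\ size (p + q) = size q.
Proof.
move=> Hs Hq; split.
  by rewrite monicE lead_coefDr //; apply/eqP/monicP.
by rewrite addrC size_polyDl.
Qed.

Lemma step_monic (p q : {poly R}) c : (size p <= (size q).-1 * c)%N -> q \is monic ->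
  (p + q ^+ c \is monic) /\ size (p + q ^+ c) = ((size q).-1 * c).+1.
Proof.
move=> Hs Hq; have := @monic_addl p (q ^+ c).
by rewrite size_monicX // monic_exp //; apply.
Qed.

Lemma lt_mulk x k : (1 <= x)%N -> (2 <= k)%N -> (x < k * x)%N.
Proof. move=> hx hk; have := leq_mul hk (leqnn x); lia. Qed.

Variables (d1 d2 : nat).
Hypotheses (h1 : (1 <= d1)%N) (h2 : (1 <= d2)%N) (h12 : (2 <= d1 * d2)%N).
Variables (A B : nat -> {poly R}).
Hypotheses (A0 : A 0%N = 0) (B0 : B 0%N = 'X)
  (AS : forall t, A t.+1 = A t + B t ^+ d1)
  (BS : forall t, B t.+1 = B t + A t.+1 ^+ d2).

Lemma inv_step t : [/\ B t \is monic, (2 <= size (B t))%N &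
   (size (A t) <= d1 * (size (B t)).-1)%N].
Proof.
elim: t => [|t [mB sB sA]].
  by rewrite A0 B0 monicX size_polyX size_poly0.
have [mA' sA'] : (A t.+1 \is monic) /\ size (A t.+1) = (d1 * (size (B t)).-1).+1.
  by rewrite AS mulnC; apply: step_monic => //; rewrite mulnC.
have hk := lt_mulk _ h12.
have [mB' sB'] : (B t.+1 \is monic) /\ size (B t.+1) = (d2 * (d1 * (size (B t)).-1)).+1.
  rewrite BS; have [] := @step_monic (B t) (A t.+1) d2 _ mA'.
    rewrite sA' /=; move: (size (B t)) sB => z hz.
    have := hk z.-1; rewrite mulnAC -mulnA; lia.
  by rewrite sA' /= => -> ->; split => //; rewrite mulnC.
split => //; rewrite ?sB' ?sA' /=; move: (size (B t)) sB => z hz.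
  have := hk z.-1; lia.
have := hk (d1 * z.-1)%N; rewrite muln_gt0 h1 /= -!mulnA mulnCA; lia.
Qed.

Lemma size_A_incr c t : (1 <= c)%N -> (size (A t ^+ c) < size (A t.+1 ^+ c))%N.
Proof.
move=> hc.
have HA : forall t, size (A t.+1 ^+ c) = (c * (d1 * (size (B t)).-1)).+1.
  move=> s; have [mB sB sA] := inv_step s.
  have [mA' sA'] : (A s.+1 \is monic) /\ size (A s.+1) = (d1 * (size (B s)).-1).+1.
    by rewrite AS mulnC; apply: step_monic => //; rewrite mulnC.
  by rewrite size_monicX // sA' /= mulnC.
case: t => [|t].
  rewrite A0 expr0n HA; case: c hc {HA} => // c' _ /=.
  by rewrite size_poly0.
rewrite !HA; have [mB sB sA] := inv_step t.
rewrite BS.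
have [mA' sA'] : (A t.+1 \is monic) /\ size (A t.+1) = (d1 * (size (B t)).-1).+1.
  by rewrite AS mulnC; apply: step_monic => //; rewrite mulnC.
have hk := lt_mulk _ h12.
have [] := @step_monic (B t) (A t.+1) d2 _ mA'.
  rewrite sA' /=; move: (size (B t)) sB => z hz.
  have := hk z.-1; rewrite mulnAC -mulnA; lia.
rewrite sA' /= => _ ->; move: (size (B t)) sB => z hz.
have := hk (c * (d1 * z.-1))%N; rewrite !muln_gt0 hc h1 /=.
rewrite [(d1 * d2)%N]mulnC -!mulnA [(d1 * (c * _))%N]mulnCA [(d2 * (c * _))%N]mulnCA; lia.
Qed.
End Deg.


Lemma ordS_small N (i : 'I_N.+1) : (i.+1 < N.+1)%N -> ordS i = inord i.+1.
Proof. by move=> h; apply: val_inj; rewrite /= inordK // modn_small. Qed.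

Lemma ordS_max N : ordS (@ord_max N) = ord0.
Proof. by apply: val_inj; rewrite /= modnn. Qed.

Lemma inj_notin (T : eqType) (F : nat -> T) : injective F ->
  forall s : seq T, exists t, F t \notin s.
Proof.
move=> HF s; case: (boolP (has (fun t => F t \notin s) (iota 0 (size s).+1))).
  by case/hasP => t _ Ht; exists t.
rewrite -all_predC => /allP Hall; exfalso.
have Hsub : {subset map F (iota 0 (size s).+1) <= s}.
  by move=> x /mapP [t Ht ->]; have := Hall t Ht; rewrite /= negbK.
have := uniq_leq_size _ Hsub; rewrite (map_inj_uniq HF) iota_uniq => /(_ isT).
by rewrite size_map size_iota ltnn.
Qed.

Lemma strict_inj (f : nat -> nat) : (forall t, f t < f t.+1)%N -> injective f.
Proof.
move=> Hf.
have mono : forall t u, (t < u)%N -> (f t < f u)%N.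
  move=> t u; elim: u => // u IH; rewrite ltnS leq_eqVlt => /orP [/eqP ->|/IH h].
    exact: Hf.
  exact: ltn_trans h (Hf u).
move=> t u E; case: (ltngtP t u) => // h; have := mono _ _ h; by rewrite E ltnn.
Qed.

Unset Implicit Arguments.
Theorem mainTheorem10 (n : nat) (e : 'I_n -> nat) (p : nat) (R : comNzRingType) :
  (3 <= n)%N ->
  (forall i, 1 <= e i)%N ->
  p \in [pchar R] ->
  (forall i, e i < p)%N ->
  (exists i, 1 < e i)%N ->
  exists H : endo R n -> Prop,
    (forall h, H h -> inG e h) /\
    elem_abelian_p_subgroup p H /\
    infinite_set H.
Proof.
move=> Hn He Hp Hep Hex.
case: n e Hn He Hep Hex => [|[|[|m]]] // e _ He Hep Hex.
pose z : 'I_m.+3 := ord0.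
pose o : 'I_m.+3 := inord 1.
pose k : 'I_m.+3 := ord_max.
have vo : val o = 1%N by rewrite /= inordK.
have zo : z != o by apply/eqP => /(congr1 val); rewrite vo.
have zk : z != k by apply/eqP => /(congr1 val).
have ok : o != k by apply/eqP => /(congr1 val); rewrite vo.
have Sk : ordS k = z by exact: ordS_max.
have Sz : ordS z = o by rewrite ordS_small.
have chain : forall t, (t <= m.+1)%N -> exists D, [/\ (1 <= D)%N,
   (forall i : 'I_m.+3, (m.+2 - t <= i)%N -> (e i <= D)%N) &
   forall r : R, inG e (trans (inord (m.+2 - t)) (r *: 'X_z ^+ D))].
  elim => [_|t IH Ht].
    have Ek : inord (m.+2 - 0) = k by apply: val_inj; rewrite /= subn0 inordK.
    exists (e k); split => //.
      move=> i hi; have -> : i = k; last by [].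
      by apply: val_inj => /=; move: (ltn_ord i) hi; rewrite subn0; lia.
    by move=> r; rewrite Ek; have := inG_alpha e k r; rewrite Sk.
  have [D [D1 DE DG]] := IH (ltnW Ht).
  pose j : 'I_m.+3 := inord (m.+2 - t.+1).
  have vj : val j = (m.+1 - t)%N by rewrite /= inordK; lia.
  have Sj : ordS j = inord (m.+2 - t) by rewrite ordS_small vj; [congr inord; lia | lia].
  have [u Hu] := fact_unit Hp (Hep j).
  have := @shortcut R m.+3 e j z D u.
  rewrite Sj => SC.
  have SC' : forall r : R, inG e (trans j (r *: 'X_z ^+ (e j * D))).
    apply: SC => //.
    - by apply/eqP => /(congr1 val) /=; rewrite ?inordK; lia.
    - by apply/eqP => /(congr1 val) /=; rewrite ?inordK; lia.
    - by apply/eqP => /(congr1 val) /=; rewrite ?inordK; lia.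
  exists (e j * D)%N; split => //.
    by rewrite muln_gt0 He.
  move=> i hi; case: (eqVneq i j) => [->|hij].
    by rewrite leq_pmulr.
  apply: leq_trans (DE i _) _; last by rewrite leq_pmull.
  move: hi hij; rewrite -(inj_eq val_inj) vj => h1 /eqP h2; move: h2; rewrite [\val i]/= => h2; lia.
have [D2 [D21 D2E D2G]] := chain m.+1 (leqnn _).
have Eo : inord (m.+2 - m.+1) = o by congr inord; lia.
rewrite Eo in D2G.
set d1 := e z.
have h12 : (2 <= d1 * D2)%N.
  case: Hex => i hi; case: (eqVneq i z) => [Ei|Ni].
    by rewrite /d1 -Ei; have := leq_mul hi D21; rewrite muln1.
  have : (e i <= D2)%N.
    have i1 : (1 <= i)%N.
      case: i hi Ni => [[|i] hi] //= _ /eqP; by case; apply: val_inj.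
    by apply: D2E; lia.
  by move=> hD; have := leq_mul (He z) (leq_trans hi hD).
pose E1 (r : R) := trans z (r *: 'X_o ^+ d1).
pose E2 (r : R) := trans o (r *: 'X_z ^+ D2).
have E1G r : inG e (E1 r) by rewrite /E1 -Sz; exact: inG_alpha.
have E2G r : inG e (E2 r) by exact: D2G.
pose T := endo_comp (E1 1) (E2 1).
pose Ti := endo_comp (E2 (-1)) (E1 (-1)).
have fE1 : freev z (1 *: 'X_o ^+ d1 : {mpoly R[m.+3]}).
  by apply: freeZ; apply: freeX; apply: freeXU; rewrite eq_sym.
have fE2 : freev o (1 *: 'X_z ^+ D2 : {mpoly R[m.+3]}).
  by apply: freeZ; apply: freeX; apply: freeXU.
have TTi : endo_comp T Ti = endo_id R m.+3.
  rewrite /T /Ti endo_compA -[endo_comp (E2 1) _]endo_compA /E2 trans_comp //; last first.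
    by apply: freeZ; apply: freeX; apply: freeXU.
  rewrite scaleNr addrN trans0 endo_comp1t /E1 trans_comp //; last first.
    by apply: freeZ; apply: freeX; apply: freeXU; rewrite eq_sym.
  by rewrite scaleNr addrN trans0.
have NkT : Nk k T.
  apply: Nk_comp; apply: Nk_trans => //; apply: freeZ; apply: freeX; apply: freeXU. all: try done.
pose g0 : {mpoly R[m.+3]} := 1 *: 'X_z ^+ e k.
pose P (t : nat) := iter t (endo_comp T) (endo_id R m.+3).
pose g t := comp_mpoly (P t) g0.
have gS t : g t.+1 = comp_mpoly T (g t) by rewrite /g comp_mpolyA.
have fg0 : freev k g0 by apply: freeZ; apply: freeX; apply: freeXU.
have gG : forall t, inG e (trans k (g t)) /\ freev k (g t).
  elim => [|t [IH1 IH2]].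
    rewrite /g /= comp_mpoly_id; split => //.
    by have := inG_alpha e k 1; rewrite Sk.
  rewrite gS; split; last by apply: free_comp => //; case: NkT.
  have -> : trans k (comp_mpoly T (g t)) = endo_comp (endo_comp T (trans k (g t))) Ti.
    by rewrite conj_trans // endo_compA TTi endo_compt1.
  apply: inG_comp; last by apply: inG_comp; [apply: E2G|apply: E1G].
  by apply: inG_comp => //; apply: inG_comp.
have Pcomm : forall t, endo_comp T (P t) = endo_comp (P t) T.
  elim => [|t IH]; first by rewrite /= endo_comp1t endo_compt1.
  by rewrite /= IH -endo_compA IH.
have PS t : P t.+1 = endo_comp (P t) T by rewrite -Pcomm.
have Tz : tnth T z = 'X_z + 1 *: 'X_o ^+ d1.
  rewrite tnth_mktuple tnth_trans (negbTE zo) comp_mpolyXU -tnth_nth tnth_trans eqxx //.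
have To : tnth T o = 'X_o + 1 *: ('X_z + 1 *: 'X_o ^+ d1) ^+ D2.
  rewrite tnth_mktuple tnth_trans eqxx comp_mpolyD comp_mpolyXU -tnth_nth tnth_trans.
  rewrite eq_sym (negbTE zo) comp_mpolyZ rmorphXn /= comp_mpolyXU -tnth_nth tnth_trans eqxx //.
pose v (j : 'I_m.+3) : {poly R} := if j == o then 'X else 0.
pose ev (q : {mpoly R[m.+3]}) : {poly R} := mmap (@polyC R) v q.
have evX j : ev 'X_j = v j by rewrite /ev mmapX mmap1U.
have evZ c q : ev (c *: q) = c%:P * ev q by rewrite /ev mmapZ.
have evD q1 q2 : ev (q1 + q2) = ev q1 + ev q2 by rewrite /ev rmorphD.
have evXn q c : ev (q ^+ c) = ev q ^+ c by rewrite /ev rmorphXn.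
pose A t := ev (tnth (P t) z).
pose B t := ev (tnth (P t) o).
have A0 : A 0%N = 0 by rewrite /A /= tnth_mktuple evX /v (negbTE zo).
have B0 : B 0%N = 'X by rewrite /B /= tnth_mktuple evX /v eqxx.
have AS t : A t.+1 = A t + B t ^+ d1.
  rewrite /A /B PS tnth_mktuple Tz comp_mpolyD comp_mpolyZ rmorphXn /= !comp_mpolyXU -!tnth_nth.
  by rewrite evD evZ evXn polyC1 mul1r.
have BS t : B t.+1 = B t + A t.+1 ^+ D2.
  rewrite AS /A /B PS tnth_mktuple To comp_mpolyD comp_mpolyZ rmorphXn /=.
  rewrite comp_mpolyD comp_mpolyZ rmorphXn /= !comp_mpolyXU -!tnth_nth.
  by rewrite evD evZ evXn evD evZ evXn polyC1 !mul1r.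
have evg t : ev (g t) = A t ^+ e k.
  by rewrite /g /g0 comp_mpolyZ rmorphXn /= comp_mpolyXU -tnth_nth evZ evXn polyC1 mul1r.
have d1pos : (1 <= d1)%N by exact: He.
have incr t : (size (ev (g t)) < size (ev (g t.+1)))%N.
  rewrite !evg; apply: (size_A_incr d1pos D21 h12 A0 B0 AS BS); exact: He.
have ginj : injective g.
  move=> t u E; apply: (strict_inj incr); by rewrite E.
pose H (h : endo R m.+3) := inG e h /\ exists q, freev k q /\ h = trans k q.
exists H; split; first by move=> h [].
split; last first.
  move=> s; have Finj : injective (fun t => trans k (g t)).
    move=> t u E; apply: ginj.
    have := congr1 (fun x => tnth x k) E; rewrite /= !tnth_trans eqxx.
    by move/addrI.
  have [t Ht] := inj_notin Finj s; exists (trans k (g t)); split => //.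
  by split; [case: (gG t) | exists (g t); split => //; case: (gG t)].
split.
- split; first by constructor.
  by exists 0; split; [exact: free0 | rewrite trans0].
- move=> h1 h2 [G1 [q1 [f1 Eh1]]] [G2 [q2 [f2 Eh2]]]; split; first exact: inG_comp.
  subst h1 h2.
  exists (q1 + q2); split; first exact: freeD.
  by rewrite trans_comp.
- move=> h1 h2 [G1 [q1 [f1 ->]]] [G2 [q2 [f2 ->]]].
  by rewrite !trans_comp // addrC.
- move=> h [_ [q [fq ->]]]; rewrite pow_trans // -mulr_natr.
  have -> : (p%:R : {mpoly R[m.+3]}) = 0.
    by rewrite -(rmorph_nat (@mpolyC _ R)) (pcharf0 Hp) raddf0.
  by rewrite mulr0 trans0.
Qed.
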